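(* Let $K$ be an algebraically closed field, $Q$ a quiver, $\mathcal X$ a $K$-linear representation of $Q$ such that $\mathrm{Ext}^1_{KQ}(G(\mathcal X),KQ)=0$, and $P$ a closed subquiver of $Q$. Then $\mathrm{Ext}^1_{KP}(G(\mathcal X\restriction P),KP)=0$.
   Context: A quiver $Q=(Q_0,Q_1)$ is a directed graph with vertices $Q_0$ and arrows $Q_1$ (arrow $a$ has source $s(a)$, target $t(a)$). Paths are composable sequences of arrows written left to right, with trivial paths $e_v$; the path algebra $KQ$ has $K$-basis all paths, with product = concatenation when the target of the first equals the source of the second, else $0$. Modules are right modules. A $K$-linear representation $\mathcal X$ of $Q$ consists of $K$-vector spaces $\mathcal X_v$ ($v\in Q_0$) and $K$-linear maps $\mathcal X_a:\mathcal X_{s(a)}\to\mathcal X_{t(a)}$ ($a\in Q_1$). $G(\mathcal X)$ is the $KQ$-module with underlying space $\bigoplus_{v\in Q_0}\mathcal X_v$, with $m e_w$ the $\mathcal X_w$-component of $m$ and $m a:=\mathcal X_a(m e_{s(a)})$, extended by distributivity. A subquiver $P=(P_0,P_1)$ has $P_0\subseteq Q_0$, $P_1\subseteq Q_1$ with sources and targets of arrows of $P_1$ in $P_0$; $\mathcal X\restriction P$ is the representation of $P$ with the same spaces and maps on $P_0,P_1$. For $S\subseteq Q_0$, the closure $\overline{S}^Q$ is the subquiver whose vertices are those reachable by a path in $Q$ from a vertex of $S$ (including $S$ itself) and whose arrows are all arrows of $Q$ with source among these vertices. A closed subquiver is one of the form $\overline{S}^Q$ for some $S\subseteq Q_0$.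 *)

(* Defs.v *)
From HB Require Import structures.
From mathcomp Require Import all_boot all_order all_algebra.
From mathcomp Require Import boolp.
Set Implicit Arguments. Unset Strict Implicit. Unset Printing Implicit Defensive.
Import Order.TTheory GRing.Theory.
Local Open Scope ring_scope.

Section DirectSum.
Variable K : fieldType.
Variable I : eqType.
Variable X : I -> lmodType K.

Definition fin_supp (f : forall i, X i) : Prop :=
  exists s : seq I, forall i, f i != 0 -> i \in s.

Record dsum := DSum { dfun :> forall i, X i; dfunP : fin_supp dfun }.

HB.instance Definition _ := gen_eqMixin dsum.
HB.instance Definition _ := gen_choiceMixin dsum.

Lemma dsum_ext (f g : dsum) : (forall i, f i = g i) -> f = g.
Proof.
case: f g => f fP [g gP] /= efg.
have efg' := functional_extensionality_dep efg; subst g; congr DSum; apply: Prop_irrelevance.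
Qed.

Lemma fin_supp0 : fin_supp (fun i => 0).
Proof. by exists [::] => i; rewrite eqxx. Qed.

Lemma fin_suppD (f g : dsum) : fin_supp (fun i => f i + g i).
Proof.
case: (dfunP f) => s Hs; case: (dfunP g) => t Ht; exists (s ++ t) => i Hi.
rewrite mem_cat; apply/orP.
case: (boolP (f i == 0)) => [/eqP f0|/Hs]; last by left.
by right; apply: Ht; rewrite f0 add0r in Hi.
Qed.

Lemma fin_suppZ (c : K) (f : dsum) : fin_supp (fun i => c *: f i).
Proof.
case: (dfunP f) => s Hs; exists s => i Hi; apply: Hs.
by apply: contraNneq Hi => ->; rewrite scaler0.
Qed.

Definition dsum0 := DSum fin_supp0.
Definition dsum_add f g := DSum (fin_suppD f g).
Definition dsum_scale c f := DSum (fin_suppZ c f).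
Definition dsum_opp f := dsum_scale (-1) f.

Lemma dsum_addA : associative dsum_add.
Proof. by move=> f g h; apply: dsum_ext => i /=; rewrite addrA. Qed.
Lemma dsum_addC : commutative dsum_add.
Proof. by move=> f g; apply: dsum_ext => i /=; rewrite addrC. Qed.
Lemma dsum_add0 : left_id dsum0 dsum_add.
Proof. by move=> f; apply: dsum_ext => i /=; rewrite add0r. Qed.
Lemma dsum_addN : left_inverse dsum0 dsum_opp dsum_add.
Proof. by move=> f; apply: dsum_ext => i /=; rewrite scaleN1r addNr. Qed.

HB.instance Definition _ :=
  GRing.isZmodule.Build dsum dsum_addA dsum_addC dsum_add0 dsum_addN.

Lemma dsum_scaleA a b f : dsum_scale a (dsum_scale b f) = dsum_scale (a * b) f.
Proof. by apply: dsum_ext => i /=; rewrite scalerA. Qed.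
Lemma dsum_scale1 : left_id 1 dsum_scale.
Proof. by move=> f; apply: dsum_ext => i /=; rewrite scale1r. Qed.
Lemma dsum_scaleDr : right_distributive dsum_scale +%R.
Proof. by move=> a f g; apply: dsum_ext => i /=; rewrite scalerDr. Qed.
Lemma dsum_scaleDl f : {morph dsum_scale^~ f : a b / a + b}.
Proof. by move=> a b; apply: dsum_ext => i /=; rewrite scalerDl. Qed.

HB.instance Definition _ :=
  GRing.Zmodule_isLmodule.Build K dsum dsum_scaleA dsum_scale1 dsum_scaleDr dsum_scaleDl.

Definition dsupp (f : dsum) : seq I := undup (projT1 (cid (dfunP f))).

Definition dinj_fun (v : I) (x : X v) : forall w, X w :=
  fun w => if v =P w is ReflectT e then eq_rect v X x w e else 0.

Lemma fin_supp_inj v (x : X v) : fin_supp (dinj_fun x).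
Proof.
exists [:: v] => w; rewrite /dinj_fun mem_seq1; case: eqP => [e _|_].
  by apply/eqP.
by rewrite eqxx.
Qed.

Definition dinj v (x : X v) : dsum := DSum (fin_supp_inj x).

End DirectSum.

Record quiver := Quiver {
  vert : eqType;
  arr : eqType;
  src : arr -> vert;
  tgt : arr -> vert }.

Section Quiver.
Variable Q : quiver.

(** a path is a starting vertex together with a (possibly empty) composable
    sequence of arrows, written left to right *)
Definition valid_path (x : vert Q * seq (arr Q)) : bool :=
  if x.2 is a :: s then (src a == x.1) && path (fun a b => tgt a == src b) a s
  else true.

Definition qpath := {x : vert Q * seq (arr Q) | valid_path x}.

Definition pstart (p : qpath) : vert Q := (val p).1.
Definition parrs (p : qpath) : seq (arr Q) := (val p).2.
Definition pend (p : qpath) : vert Q := last (pstart p) (map (@tgt Q) (parrs p)).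

Definition ptriv (v : vert Q) : qpath := exist valid_path (v, [::]) isT.

Definition pcat (p q : qpath) : option qpath :=
  if pend p == pstart q then insub (pstart p, parrs p ++ parrs q) else None.

End Quiver.

Section PathAlgebra.
Variable K : fieldType.
Variable Q : quiver.

Definition KQ := dsum (fun _ : qpath Q => (K^o : lmodType K)).

Definition kqbasis (p : qpath Q) : KQ :=
  @dinj K _ (fun _ : qpath Q => (K^o : lmodType K)) p (1 : K^o).

Definition kqmul (x y : KQ) : KQ :=
  \sum_(p <- dsupp x) \sum_(q <- dsupp y)
     ((x p : K) * (y q : K)) *: (if pcat p q is Some r then kqbasis r else 0).

(** right KQ-modules: a K-vector space with a bilinear, associative right
    action of KQ, which is unital (M KQ = M, equivalently every element is
    fixed by some element of KQ, as KQ has local units) *)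
Record is_kqmod (V : lmodType K) (act : V -> KQ -> V) : Prop := {
  actDl : forall v w x, act (v + w) x = act v x + act w x;
  actDr : forall v x y, act v (x + y) = act v x + act v y;
  actZl : forall (c : K) v x, act (c *: v) x = c *: act v x;
  actZr : forall (c : K) v x, act v (c *: x) = c *: act v x;
  actA : forall v x y, act (act v x) y = act v (kqmul x y);
  act_unital : forall v, exists x, act v x = v }.

Definition is_kqhom (V W : lmodType K) (actV : V -> KQ -> V) (actW : W -> KQ -> W)
  (f : V -> W) : Prop :=
  (forall u v, f (u + v) = f u + f v) /\ (forall v x, f (actV v x) = actW (f v) x).

(** Ext^1_{KQ}(M, N) = 0 (Yoneda description): every short exact sequence
    0 -> N -> E -> M -> 0 of right KQ-modules splits *)
Definition ext1_zero (M : lmodType K) (actM : M -> KQ -> M)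
  (N : lmodType K) (actN : N -> KQ -> N) : Prop :=
  forall (E : lmodType K) (actE : E -> KQ -> E), is_kqmod actE ->
  forall (i : N -> E) (pi : E -> M),
    is_kqhom actN actE i -> is_kqhom actE actM pi ->
    injective i -> (forall m, exists e, pi e = m) ->
    (forall e, pi e = 0 <-> exists n, i n = e) ->
  exists sigma : M -> E, is_kqhom actM actE sigma /\ forall m, pi (sigma m) = m.

Record rep := Rep {
  rsp : vert Q -> lmodType K;
  rmap : forall a : arr Q, {linear rsp (src a) -> rsp (tgt a)} }.

Section GFunctor.
Variable X : rep.

Definition GX := dsum (rsp X).

(** m e_v = X_v-component of m *)
Definition gtriv (m : GX) (v : vert Q) : GX := @dinj K _ (rsp X) v (m v).
(** m a = X_a (m e_{s(a)}) *)
Definition garr (m : GX) (a : arr Q) : GX :=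
  @dinj K _ (rsp X) (tgt a) (rmap X a (m (src a))).
Definition gpath (m : GX) (p : qpath Q) : GX :=
  foldl garr (gtriv m (pstart p)) (parrs p).
Definition gact (m : GX) (x : KQ) : GX :=
  \sum_(p <- dsupp x) (x p : K) *: gpath m p.

End GFunctor.
End PathAlgebra.

Record subquiver (Q : quiver) := Subquiver {
  sv : pred (vert Q);
  sa : pred (arr Q);
  sa_src : forall a, sa a -> sv (src a);
  sa_tgt : forall a, sa a -> sv (tgt a) }.

Definition sub_quiver (Q : quiver) (P : subquiver Q) : quiver :=
  @Quiver {v : vert Q | sv P v} {a : arr Q | sa P a}
    (fun a => exist (sv P) (src (val a)) (sa_src (valP a)))
    (fun a => exist (sv P) (tgt (val a)) (sa_tgt (valP a))).

Definition closed_subquiver (Q : quiver) (P : subquiver Q) : Prop :=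
  exists S : vert Q -> Prop,
    (forall v, sv P v <-> exists p : qpath Q, S (pstart p) /\ pend p = v) /\
    (forall a, sa P a <-> sv P (src a)).

Definition rep_restrict (K : fieldType) (Q : quiver) (X : rep K Q) (P : subquiver Q)
  : rep K (sub_quiver P) :=
  @Rep K (sub_quiver P) (fun v => rsp X (val v)) (fun a => rmap X (val a)).

(* Main.v *)
Require Import Defs.
From HB Require Import structures.
From mathcomp Require Import all_boot all_order all_algebra.
From mathcomp Require Import boolp.
Set Implicit Arguments. Unset Strict Implicit. Unset Printing Implicit Defensive.
Import Order.TTheory GRing.Theory.
Local Open Scope ring_scope.

Section DS.
Variable K : fieldType.
Variable I : eqType.
Variable X : I -> lmodType K.
Implicit Types (x y : dsum X).

Lemma dsumD x y i : (x + y) i = x i + y i. Proof. by []. Qed.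
Lemma dsumZ c x i : (c *: x) i = c *: x i. Proof. by []. Qed.
Lemma dsum0E i : (0 : dsum X) i = 0. Proof. by []. Qed.
Lemma dsumN x i : (- x) i = - x i.
Proof. by rewrite /= /dsum_opp /= scaleN1r. Qed.
Lemma dsum_sumE (J : Type) (r : seq J) (P : pred J) (F : J -> dsum X) i :
  (\sum_(j <- r | P j) F j) i = \sum_(j <- r | P j) F j i.
Proof.
elim: r => [|a r IH]; rewrite ?big_nil ?big_cons //.
by case: (P a); rewrite ?dsumD IH.
Qed.

Lemma dsuppP x i : x i != 0 -> i \in dsupp x.
Proof. by rewrite /dsupp mem_undup; case: cid => s /= Hs; apply: Hs. Qed.
Lemma dsupp_uniq x : uniq (dsupp x). Proof. exact: undup_uniq. Qed.

Lemma dinj_eq i (u : X i) : @dinj K I X i u i = u.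
Proof.
rewrite /dinj /dinj_fun /=; case: eqP => // e.
by rewrite (eq_irrelevance e erefl).
Qed.
Lemma dinj_neq i j (u : X i) : i != j -> @dinj K I X i u j = 0.
Proof. by rewrite /dinj /dinj_fun /=; case: eqP. Qed.
Lemma dinj0 i : @dinj K I X i 0 = 0.
Proof.
apply: dsum_ext => j; rewrite /dinj /dinj_fun /=; case: eqP => // e.
by case: _ / e.
Qed.
Lemma dinjD i (u v : X i) : @dinj K I X i (u + v) = dinj u + dinj v.
Proof.
apply: dsum_ext => j; rewrite dsumD; case: (eqVneq i j) => [<-|ne].
  by rewrite !dinj_eq.
by rewrite !dinj_neq // addr0.
Qed.
Lemma dinjZ i c (u : X i) : @dinj K I X i (c *: u) = c *: dinj u.
Proof.
apply: dsum_ext => j; rewrite dsumZ; case: (eqVneq i j) => [<-|ne].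
  by rewrite !dinj_eq.
by rewrite !dinj_neq // scaler0.
Qed.

Section Dext.
Variable V : lmodType K.
Definition dext (F : forall i, X i -> V) x : V := \sum_(i <- dsupp x) F i (x i).

Lemma dext_seq F x s : (forall i, F i 0 = 0) -> uniq s ->
  (forall i, x i != 0 -> i \in s) -> dext F x = \sum_(i <- s) F i (x i).
Proof.
move=> F0 us Hs.
have E r : \sum_(i <- r) F i (x i) = \sum_(i <- [seq i <- r | x i != 0]) F i (x i).
  rewrite big_filter [RHS]big_mkcond; apply: eq_bigr => i _.
  by case: eqP => [->|]; rewrite ?F0.
rewrite /dext (E (dsupp x)) (E s); apply: perm_big; apply: uniq_perm; rewrite ?filter_uniq ?dsupp_uniq //.
move=> i; rewrite !mem_filter; case: (boolP (x i != 0)) => //= nz.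
by rewrite dsuppP // Hs.
Qed.

Lemma in_cover x s i : i \in dsupp x -> i \in undup (dsupp x ++ s).
Proof. by rewrite mem_undup mem_cat => ->. Qed.

Local Unset Implicit Arguments.
Variable F : forall i, X i -> V.
Hypothesis FA : forall i u v, F i (u + v) = F i u + F i v.
Hypothesis FZ : forall i c u, F i (c *: u) = c *: F i u.
Lemma F0 i : F i 0 = 0.
Proof. by apply: (addrI (F i 0)); rewrite -FA !addr0. Qed.

Lemma dext_seq' x s : uniq s -> {subset dsupp x <= s} ->
  dext F x = \sum_(i <- s) F i (x i).
Proof. by move=> us sub; apply: dext_seq => // [i|i /dsuppP /sub//]; apply: F0. Qed.

Lemma dext_add x y : dext F (x + y) = dext F x + dext F y.
Proof.
set s := undup (dsupp x ++ dsupp y ++ dsupp (x + y)).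
have us : uniq s by apply: undup_uniq.
rewrite (@dext_seq' (x + y) s) // ?(@dext_seq' x s) // ?(@dext_seq' y s) //; 
  try by move=> i; rewrite /s mem_undup !mem_cat => ->; rewrite ?orbT.
by rewrite -big_split; apply: eq_bigr => i _; rewrite dsumD FA.
Qed.

Lemma dext_scale c x : dext F (c *: x) = c *: dext F x.
Proof.
set s := undup (dsupp x ++ dsupp (c *: x)).
have us : uniq s by apply: undup_uniq.
rewrite (@dext_seq' (c *: x) s) // ?(@dext_seq' x s) //;
  try by move=> i; rewrite /s mem_undup !mem_cat => ->; rewrite ?orbT.
by rewrite scaler_sumr; apply: eq_bigr => i _; rewrite dsumZ FZ.
Qed.

Lemma dext0 : dext F 0 = 0.
Proof.
rewrite (@dext_seq _ _ [::]) ?big_nil //; first exact: F0.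
by move=> i; rewrite dsum0E eqxx.
Qed.

Lemma dext_dinj i u : dext F (@dinj K I X i u) = F i u.
Proof.
rewrite (@dext_seq _ _ [:: i]) //; first by rewrite big_seq1 dinj_eq.
  exact: F0.
move=> j; case: (eqVneq i j) => [e _|ne]; first by rewrite mem_seq1 -e.
by rewrite dinj_neq ?eqxx.
Qed.

Lemma dext_sum (J : Type) (r : seq J) (G : J -> dsum X) :
  dext F (\sum_(j <- r) G j) = \sum_(j <- r) dext F (G j).
Proof.
elim: r => [|a r IH]; rewrite ?big_nil ?big_cons ?dext0 //.
by rewrite dext_add IH.
Qed.
End Dext.

Lemma dext_eq (V : lmodType K) (F G : forall i, X i -> V) x :
  (forall i, i \in dsupp x -> F i (x i) = G i (x i)) -> dext F x = dext G x.
Proof. by move=> H; apply: eq_big_seq. Qed.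

Lemma dext_map (V W : lmodType K) (F : forall i, X i -> V) (g : V -> W) x :
  (forall u v, g (u + v) = g u + g v) ->
  g (dext F x) = dext (fun i u => g (F i u)) x.
Proof.
move=> gA; have g0 : g 0 = 0.
  by apply: (addrI (g 0)); rewrite -gA !addr0.
exact: (big_morph g gA g0).
Qed.

Lemma dext_Fadd (V : lmodType K) (F G : forall i, X i -> V) x :
  dext (fun i u => F i u + G i u) x = dext F x + dext G x.
Proof. by rewrite /dext big_split. Qed.
Lemma dext_Fscale (V : lmodType K) c (F : forall i, X i -> V) x :
  dext (fun i u => c *: F i u) x = c *: dext F x.
Proof. by rewrite /dext scaler_sumr. Qed.
Lemma dext_F0 (V : lmodType K) x : dext (fun i (u : X i) => (0 : V)) x = 0.
Proof. by rewrite /dext big1. Qed.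
Lemma dext_Fsum (V : lmodType K) (J : Type) (r : seq J) (F : J -> forall i, X i -> V) x :
  dext (fun i u => \sum_(j <- r) F j i u) x = \sum_(j <- r) dext (F j) x.
Proof. by rewrite /dext exchange_big. Qed.

Lemma dsum_decomp x : x = dext (fun i u => @dinj K I X i u) x.
Proof.
apply: dsum_ext => j.
rewrite (dext_seq (s := undup (j :: dsupp x))); last 3 first.
- by move=> i; rewrite dinj0.
- exact: undup_uniq.
- by move=> i /dsuppP; rewrite mem_undup inE => ->; rewrite orbT.
rewrite dsum_sumE (bigD1_seq j) ?undup_uniq ?mem_undup ?mem_head // dinj_eq.
rewrite big1 => [|i ne]; last by rewrite dinj_neq // eq_sym.
by rewrite /= addr0.
Qed.

End DS.

Section KS.
Variable K : fieldType.
Variable I : eqType.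
Local Notation KI := (dsum (fun _ : I => (K^o : lmodType K))).
Implicit Types (x y : KI).

Definition ext (V : lmodType K) (F : I -> V) x : V := dext (fun p (c : K^o) => c *: F p) x.
Definition bas (p : I) : KI := @dinj K I (fun _ => K^o) p 1.

Section E.
Variable V : lmodType K.
Implicit Types F G : I -> V.

Lemma ext_add F x y : ext F (x + y) = ext F x + ext F y.
Proof. by apply: dext_add ; intros; rewrite ?scalerDl ?scalerA. Qed.
Lemma ext_scale F c x : ext F (c *: x) = c *: ext F x.
Proof. by apply: dext_scale ; intros; rewrite ?scalerDl ?scalerA. Qed.
Lemma ext0 F : ext F 0 = 0.
Proof. by apply: dext0 ; intros; rewrite ?scalerDl ?scalerA. Qed.
Lemma ext_bas F p : ext F (bas p) = F p.
Proof. by rewrite /ext dext_dinj ?scale1r // ; intros; rewrite ?scalerDl ?scalerA. Qed.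
Lemma ext_sum (J : Type) (r : seq J) F (G : J -> KI) :
  ext F (\sum_(j <- r) G j) = \sum_(j <- r) ext F (G j).
Proof. by apply: dext_sum ; intros; rewrite ?scalerDl ?scalerA. Qed.
Lemma ext_Fadd F G x : ext (fun p => F p + G p) x = ext F x + ext G x.
Proof. by rewrite /ext -dext_Fadd; apply: dext_eq => i _; rewrite scalerDr. Qed.
Lemma ext_Fscale c F x : ext (fun p => c *: F p) x = c *: ext F x.
Proof. by rewrite /ext -dext_Fscale; apply: dext_eq => i _; rewrite !scalerA mulrC. Qed.
Lemma ext_F0 x : ext (fun _ => (0 : V)) x = 0.
Proof. by rewrite /ext /dext big1 // => i _; rewrite scaler0. Qed.
Lemma ext_Fsum (J : Type) (r : seq J) (F : J -> I -> V) x :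
  ext (fun p => \sum_(j <- r) F j p) x = \sum_(j <- r) ext (F j) x.
Proof. by rewrite /ext -dext_Fsum; apply: dext_eq => i _; rewrite scaler_sumr. Qed.
Lemma ext_eq F G x : (forall p, p \in dsupp x -> F p = G p) -> ext F x = ext G x.
Proof. by move=> H; apply: dext_eq => i /H ->. Qed.
End E.

Lemma ext_map (V W : lmodType K) (F : I -> V) (g : V -> W) x :
  (forall u v, g (u + v) = g u + g v) -> (forall c u, g (c *: u) = c *: g u) ->
  g (ext F x) = ext (fun p => g (F p)) x.
Proof.
by move=> gA gZ; rewrite /ext (dext_map _ _ gA); apply: dext_eq => i _; rewrite gZ.
Qed.

Lemma bas_eq p : bas p p = 1. Proof. exact: dinj_eq. Qed.
Lemma bas_neq p q : p != q -> bas p q = 0. Proof. exact: dinj_neq. Qed.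

Lemma ext_decomp x : x = ext bas x.
Proof.
rewrite {1}(dsum_decomp x) /ext; apply: dext_eq => i _.
apply: dsum_ext => j; rewrite dsumZ; case: (eqVneq i j) => [<-|ne].
  by rewrite bas_eq dinj_eq; rewrite /GRing.scale /= mulr1.
by rewrite bas_neq // dinj_neq // scaler0.
Qed.

Lemma ext_swap (V : lmodType K) (C : I -> I -> V) x y :
  ext (fun q => ext (fun p => C p q) x) y = ext (fun p => ext (fun q => C p q) y) x.
Proof.
rewrite /ext /dext.
under eq_bigr do rewrite scaler_sumr.
rewrite exchange_big /=; apply: eq_bigr => p _; rewrite scaler_sumr.
by apply: eq_bigr => q _; rewrite !scalerA mulrC.
Qed.

Lemma ext_lin (V : lmodType K) (F : I -> V) :
  (forall x y, ext F (x + y) = ext F x + ext F y) /\ (forall c x, ext F (c *: x) = c *: ext F x).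
Proof. by split => *; rewrite ?ext_add ?ext_scale. Qed.

End KS.

Section Paths.
Variable Q : quiver.
Implicit Types p q r : qpath Q.

Lemma pcat_valid p q : pend p = pstart q -> valid_path (pstart p, parrs p ++ parrs q).
Proof.
case: p q => [[v s] /= Hp] [[w t] /= Hq]; rewrite /pend /pstart /parrs /= => e.
case: s Hp e => [|a s] /= Hp e; first by subst w.
move/andP: Hp => [sa ps]; apply/andP; split => //.
rewrite cat_path ps /=; case: t Hq => [|b t] //= /andP [sb pt].
by rewrite pt andbT (eqP sb) -e last_map eqxx.
Qed.

Lemma pcatP p q (e : pend p = pstart q) :
  pcat p q = Some (exist (fun x => valid_path x) _ (pcat_valid e)).
Proof.
rewrite /pcat e eqxx; case: insubP => [u _ E|]; last by rewrite (pcat_valid e).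
by congr Some; apply: val_inj; rewrite E.
Qed.

Lemma pcat_none p q : pend p != pstart q -> pcat p q = None.
Proof. by rewrite /pcat => /negbTE ->. Qed.

Lemma pcat_some p q r : pcat p q = Some r ->
  pend p = pstart q /\ val r = (pstart p, parrs p ++ parrs q).
Proof.
rewrite /pcat; case: eqP => // e; case: insubP => //= u _ E [<-]; by [].
Qed.

Lemma pend_cat p q r : pcat p q = Some r -> pend r = pend q /\ pstart r = pstart p.
Proof.
move=> /pcat_some [e E]; rewrite /pend /pstart /parrs E /= map_cat last_cat.
by split => //; rewrite -/(pend p) e.
Qed.

Lemma pcat_triv p w : pcat p (ptriv w) = if pend p == w then Some p else None.
Proof.
case: eqP => e; last by rewrite pcat_none //; apply/eqP.
rewrite (pcatP (e : pend p = pstart (ptriv w))); congr Some; apply: val_inj => /=.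
rewrite /parrs /= cats0; by case: p e => [[]].
Qed.

Lemma apath_valid (a : arr Q) : valid_path (src a, [:: a]).
Proof. by rewrite /valid_path /= eqxx. Qed.
Definition apath (a : arr Q) : qpath Q := exist (fun x => valid_path x) _ (apath_valid a).

Lemma pcat_arr p a : pcat p (apath a) = None \/
  exists2 r, pcat p (apath a) = Some r & pend p = src a /\ pend r = tgt a.
Proof.
case: (eqVneq (pend p) (src a)) => e; last by left; rewrite pcat_none.
right; exists (exist (fun x => valid_path x) _ (pcat_valid (e : pend p = pstart (apath a)))).
  exact: pcatP.
split => //; rewrite /pend /= /parrs /= map_cat last_cat /=; by [].
Qed.

Lemma pcat_triv_l w q : pcat (ptriv w) q = if w == pstart q then Some q else None.
Proof.
case: eqP => e; last by rewrite pcat_none //; apply/eqP.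
rewrite (pcatP (e : pend (ptriv w) = pstart q)); congr Some; apply: val_inj => /=.
by rewrite /= e; case: q e => [[]].
Qed.

End Paths.

Section RepMod.
Variable K : fieldType.
Variable Q : quiver.
Variable V : lmodType K.
Variables (proj : vert Q -> V -> V) (arrv : arr Q -> V -> V).
Hypothesis projA : forall w u v, proj w (u + v) = proj w u + proj w v.
Hypothesis projZ : forall w c u, proj w (c *: u) = c *: proj w u.
Hypothesis arrA : forall a u v, arrv a (u + v) = arrv a u + arrv a v.
Hypothesis arrZ : forall a c u, arrv a (c *: u) = c *: arrv a u.
Hypothesis PP : forall w s v, proj w (proj s v) = if s == w then proj s v else 0.
Hypothesis PA : forall w a v, proj w (arrv a v) = if tgt a == w then arrv a v else 0.
Hypothesis Fin : forall v, exists s : seq (vert Q), v = \sum_(w <- s) proj w v.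

Definition pathact v (p : qpath Q) := foldl (fun u a => arrv a u) (proj (pstart p) v) (parrs p).
Definition ract v (x : KQ K Q) := ext (pathact v) x.

Lemma arr0 a : arrv a 0 = 0.
Proof. by apply: (addrI (arrv a 0)); rewrite -arrA !addr0. Qed.

Lemma fold0 s : foldl (fun u a => arrv a u) 0 s = 0.
Proof. by elim: s => //= a s; rewrite arr0. Qed.

Lemma foldA s u v : foldl (fun u a => arrv a u) (u + v) s =
  foldl (fun u a => arrv a u) u s + foldl (fun u a => arrv a u) v s.
Proof. by elim: s u v => //= a s IH u v; rewrite arrA IH. Qed.
Lemma foldZ s c u : foldl (fun u a => arrv a u) (c *: u) s = c *: foldl (fun u a => arrv a u) u s.
Proof. by elim: s u => //= a s IH u; rewrite arrZ IH. Qed.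

Lemma pathactA u v p : pathact (u + v) p = pathact u p + pathact v p.
Proof. by rewrite /pathact projA foldA. Qed.
Lemma pathactZ c u p : pathact (c *: u) p = c *: pathact u p.
Proof. by rewrite /pathact projZ foldZ. Qed.

Lemma proj_fold w s x u :
  proj w (foldl (fun u a => arrv a u) (proj x u) s) =
  if last x (map (@tgt Q) s) == w then foldl (fun u a => arrv a u) (proj x u) s else 0.
Proof.
elim: s x u => [|a s IH] x u /=; first by rewrite PP.
have -> : arrv a (proj x u) = proj (tgt a) (arrv a (proj x u)) by rewrite PA eqxx.
by rewrite IH.
Qed.

Lemma pathact_cat v p q :
  pathact (pathact v p) q = if pcat p q is Some r then pathact v r else 0.
Proof.
rewrite {1}/pathact {1}/pathact proj_fold -/(pend p).
case: (eqVneq (pend p) (pstart q)) => e; last by rewrite pcat_none // fold0.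
by rewrite (pcatP e) /pathact /= foldl_cat.
Qed.

Definition B (p q : qpath Q) : KQ K Q := if pcat p q is Some r then bas K r else 0.

Lemma ract_kqmod : is_kqmod ract.
Proof.
split.
- by move=> u v x; rewrite /ract -ext_Fadd; apply: ext_eq => p _; rewrite pathactA.
- by move=> v x y; rewrite /ract ext_add.
- by move=> c u x; rewrite /ract -ext_Fscale; apply: ext_eq => p _; rewrite pathactZ.
- by move=> c v x; rewrite /ract ext_scale.
- move=> v x y; rewrite /ract.
  have -> : kqmul x y = ext (fun p => ext (fun q => B p q) y) x.
    rewrite /kqmul /ext /dext; apply: eq_bigr => p _; rewrite scaler_sumr.
    by apply: eq_bigr => q _; rewrite scalerA.
  rewrite (ext_map _ _ (ext_lin _).1 (ext_lin _).2).
  under [RHS]ext_eq => p _ do rewrite (ext_map _ _ (ext_lin _).1 (ext_lin _).2).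
  rewrite -ext_swap; apply: ext_eq => q _.
  rewrite (ext_map _ _ (fun u v => pathactA u v q) (fun c u => pathactZ c u q)).
  apply: ext_eq => p _; rewrite pathact_cat /B.
  by case: (pcat p q) => [r|]; rewrite ?ext_bas ?ext0.
- move=> v; case: (Fin v) => s E.
  exists (\sum_(w <- s) bas K (ptriv w)); rewrite /ract ext_sum.
  by rewrite [RHS]E; apply: eq_bigr => w _; rewrite ext_bas.
Qed.

End RepMod.

From mathcomp Require classical_sets.

Section LinSection.
Variable K : fieldType.
Variables (E M : lmodType K) (f : E -> M).
Hypothesis fA : forall u v, f (u + v) = f u + f v.
Hypothesis fZ : forall c u, f (c *: u) = c *: f u.
Hypothesis fS : forall m, exists e, f e = m.

Let f0 : f 0 = 0.
Proof. by apply: (addrI (f 0)); rewrite -fA !addr0. Qed.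

Definition goodG (G : M * E -> Prop) :=
  [/\ (forall m e m' e', G (m, e) -> G (m', e') -> G (m + m', e + e')),
      (forall c m e, G (m, e) -> G (c *: m, c *: e)),
      (forall m e, G (m, e) -> f e = m) &
      (forall e, G (0, e) -> e = 0)].

Lemma lin_section : exists g : M -> E,
  [/\ (forall u v, g (u + v) = g u + g v), (forall c u, g (c *: u) = c *: g u) &
      forall m, f (g m) = m].
Proof.
have [A [gA maxA]] : exists A, goodG A /\ forall B, classical_sets.proper A B -> ~ goodG B.
  apply: classical_sets.Zorn_bigcup => F FP Ftot.
  rewrite /classical_sets.bigcup /=.
  split.
  - move=> m e m' e' [X FX Xz] [Y FY Yz].
    case: (Ftot X Y FX FY) => [XY|YX].
    + exists Y => //; case: (FP Y FY) => H _ _ _; apply: H => //; exact: XY.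
    + exists X => //; case: (FP X FX) => H _ _ _; apply: H => //; exact: YX.
  - move=> c m e [X FX Xz]; exists X => //; by case: (FP X FX) => _ H _ _; apply: H.
  - move=> m e [X FX Xz]; by case: (FP X FX) => _ _ H _; apply: H.
  - move=> e [X FX Xz]; by case: (FP X FX) => _ _ _ H; apply: H.
case: gA => Aadd Ascale Af Az.
have Adom : forall m0, exists e, A (m0, e).
  move=> m0; apply: boolp.contrapT => nA.
  have [e0 [fe0 e00]] : exists e0, f e0 = m0 /\ (m0 = 0 -> e0 = 0).
    case: (eqVneq m0 0) => [->|nz]; first by exists 0; split.
    by case: (fS m0) => e0 fe0; exists e0; split => // /eqP; rewrite (negbTE nz).
  pose A0 z := A z \/ z = (0, 0).
  have A0add m e m' e' : A0 (m, e) -> A0 (m', e') -> A0 (m + m', e + e').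
    case=> [H|[-> ->]]; case=> [H'|[-> ->]]; rewrite ?addr0 ?add0r; try by left; auto.
    by right.
  have A0scale c m e : A0 (m, e) -> A0 (c *: m, c *: e).
    by case=> [H|[-> ->]]; [left; auto | right; rewrite !scaler0].
  pose B (z : M * E) := exists c m e, A0 (m, e) /\ z = (m + c *: m0, e + c *: e0).
  apply: (maxA B); last split.
  - split.
      move=> [m e] Ame; exists 0, m, e; split; first by left.
      by rewrite !scale0r !addr0.
    move=> BA; have : B (m0, e0) by exists 1, 0, 0; split; [right | rewrite !scale1r !add0r].
    by move/BA => H; apply: nA; exists e0.
  - move=> m e m' e' [c [n [d [H [-> ->]]]]] [c' [n' [d' [H' [-> ->]]]]].
    exists (c + c'), (n + n'), (d + d'); split; first exact: A0add.
    by rewrite !scalerDl; congr pair; rewrite addrACA.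
  - move=> k m e [c [n [d [H [-> ->]]]]].
    exists (k * c), (k *: n), (k *: d); split; first exact: A0scale.
    by rewrite !scalerDr !scalerA.
  - move=> m e [c [n [d [H [-> ->]]]]].
    rewrite fA fZ fe0; congr (_ + _).
    by case: H => [/Af //|[-> ->]].
  - move=> e [c [n [d [H [E1 ->]]]]].
    case: (eqVneq c 0) => [c0|cnz].
      move: E1; rewrite c0 !scale0r !addr0 => n0; subst n.
      by case: H => [/Az ->|[->]].
    have m0E : m0 = - c^-1 *: n.
      apply: (scalerI cnz); rewrite scalerA mulrN divff // scaleN1r.
      by apply: (addrI n); rewrite -E1 subrr.
    case: H => [H|[n0 d0]].
      exfalso; apply: nA; exists (- c^-1 *: d); rewrite m0E; exact: Ascale.
    subst n d; move: m0E; rewrite scaler0 => m00.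
    by rewrite (e00 m00) scaler0 addr0.
pose g m := classical_sets.xget 0 (fun e => A (m, e)).
have Ag m : A (m, g m) by exact: (@classical_sets.xgetPex _ 0 (fun e => A (m, e)) (Adom m)).
have uniq m e e' : A (m, e) -> A (m, e') -> e = e'.
  move=> H H'; have := Aadd _ _ _ _ H (Ascale (-1) _ _ H').
  rewrite !scaleN1r subrr => /Az /eqP; rewrite subr_eq0 => /eqP //.
exists g; split.
- by move=> u v; apply: (uniq (u + v)) => //; apply: Aadd.
- by move=> c u; apply: (uniq (c *: u)) => //; apply: Ascale.
- by move=> m; apply: Af.
Qed.
End LinSection.

Section QLemmas.
Variable K : fieldType.
Variable Q : quiver.
Local Notation KQQ := (KQ K Q).
Implicit Types (p q r : qpath Q) (x y : KQQ).

Lemma kqmulE x y : kqmul x y = ext (fun p => ext (fun q => B K p q) y) x.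
Proof.
rewrite /kqmul /ext /dext; apply: eq_bigr => p _; rewrite scaler_sumr.
by apply: eq_bigr => q _; rewrite scalerA.
Qed.

Lemma kqmul_bas p q : kqmul (bas K p) (bas K q) = B K p q.
Proof. by rewrite kqmulE ext_bas ext_bas. Qed.

Lemma kqmul_basr x q : kqmul x (bas K q) = ext (fun p => B K p q) x.
Proof. by rewrite kqmulE; apply: ext_eq => p _; rewrite ext_bas. Qed.

Lemma kqmulZr c x y : kqmul x (c *: y) = c *: kqmul x y.
Proof.
rewrite !kqmulE -ext_Fscale; apply: ext_eq => p _; exact: ext_scale.
Qed.

Lemma B_triv p w : B K p (ptriv w) = if pend p == w then bas K p else 0.
Proof. by rewrite /B pcat_triv; case: eqP. Qed.

Lemma valid_rcons v0 s a : valid_path (v0, rcons s a) ->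
  valid_path (v0, s) /\ last v0 (map (@tgt Q) s) = src a.
Proof.
rewrite /valid_path /=; case: s => [|b s] /=; first by rewrite andbT => /eqP ->.
rewrite rcons_path => /andP [sb /andP [ps /eqP e]]; split; first by rewrite sb ps.
by rewrite last_map.
Qed.

Lemma path_rect (Pr : qpath Q -> Prop) :
  (forall w, Pr (ptriv w)) ->
  (forall p a r, pcat p (apath a) = Some r -> Pr p -> Pr r) -> forall p, Pr p.
Proof.
move=> H0 HS [[v0 s] h].
elim/last_ind: s h => [|s a IH] h.
  by have -> : exist _ (v0, [::]) h = ptriv v0 by apply: val_inj.
have [h' e] := valid_rcons h.
apply: (HS (exist _ (v0, s) h') a) => //.
rewrite (pcatP (e : pend (exist _ (v0, s) h') = pstart (apath a))); congr Some.
by apply: val_inj => /=; rewrite cats1.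
Qed.

Lemma pcat_arr_some p a r : pcat p (apath a) = Some r ->
  pstart r = pstart p /\ parrs r = rcons (parrs p) a /\ pend p = src a.
Proof.
by move=> /pcat_some [e E]; rewrite /pstart /parrs E /= cats1.
Qed.

Section Act.
Variable V : lmodType K.
Variable act : V -> KQQ -> V.
Hypothesis Hact : is_kqmod act.

Lemma act0 v : act v 0 = 0.
Proof. by apply: (addrI (act v 0)); rewrite -(actDr Hact) !addr0. Qed.
Lemma act0l x : act 0 x = 0.
Proof. by apply: (addrI (act 0 x)); rewrite -(actDl Hact) !addr0. Qed.

Lemma act_bas_cat v p q :
  act (act v (bas K p)) (bas K q) = if pcat p q is Some r then act v (bas K r) else 0.
Proof.
rewrite (actA Hact) kqmul_bas /B; case: (pcat p q) => // ; exact: act0.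
Qed.

Lemma act_bas_path v p :
  act v (bas K p) = foldl (fun u a => act u (bas K (apath a)))
                          (act v (bas K (ptriv (pstart p)))) (parrs p).
Proof.
elim/path_rect: p => [w //|p a r e IH].
have [-> [-> _]] := pcat_arr_some e.
by rewrite foldl_rcons -IH act_bas_cat e.
Qed.

Lemma act_ext v x : act v x = ext (fun p => act v (bas K p)) x.
Proof.
rewrite {1}(ext_decomp x); apply: ext_map => [u w|c u].
  exact: (actDr Hact).
exact: (actZr Hact).
Qed.
End Act.

Lemma ext_B_triv w s y :
  ext (fun p => B K p (ptriv w)) (ext (fun p => B K p (ptriv s)) y) =
  if s == w then ext (fun p => B K p (ptriv s)) y else 0.
Proof.
rewrite (ext_map _ _ (ext_lin _).1 (ext_lin _).2).
case: eqP => [<-|ne].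
  apply: ext_eq => p _; rewrite B_triv; case: eqP => e; last by rewrite ext0.
  by rewrite ext_bas B_triv e eqxx.
transitivity (ext (fun _ : qpath Q => 0 : KQQ) y); last exact: ext_F0.
apply: ext_eq => p _; rewrite B_triv; case: eqP => e; last by rewrite ext0.
by rewrite ext_bas B_triv e; case: eqP.
Qed.

Lemma ext_B_arr w a y :
  ext (fun p => B K p (ptriv w)) (ext (fun p => B K p (apath a)) y) =
  if tgt a == w then ext (fun p => B K p (apath a)) y else 0.
Proof.
rewrite (ext_map _ _ (ext_lin _).1 (ext_lin _).2).
have E p : ext (fun p0 => B K p0 (ptriv w)) (B K p (apath a)) =
           if tgt a == w then B K p (apath a) else 0.
  rewrite [B K p (apath a)]/B; case: (pcat_arr p a) => [->|[r -> [_ er]]].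
    by rewrite ext0; case: ifP.
  by rewrite ext_bas B_triv er.
case: eqP => [e|ne].
  by apply: ext_eq => p _; rewrite E; case: eqP.
transitivity (ext (fun _ : qpath Q => 0 : KQQ) y); last exact: ext_F0.
by apply: ext_eq => p _; rewrite E; case: eqP.
Qed.

Lemma B_path q p :
  B K q p = foldl (fun z a => ext (fun t => B K t (apath a)) z)
                  (B K q (ptriv (pstart p))) (parrs p).
Proof.
elim/path_rect: p => [w //|p a r e IH].
have [sr [ar ep]] := pcat_arr_some e.
rewrite sr ar foldl_rcons -IH.
rewrite [B K q r]/B [B K q p]/B; case: (eqVneq (pend q) (pstart p)) => [eq|neq]; last first.
  by rewrite (pcat_none neq) ext0 pcat_none // sr.
rewrite (pcatP eq) ext_bas /B.
set qp := exist _ _ _.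
have eqa : pend qp = pstart (apath a).
  by rewrite /pend /= map_cat last_cat -/(pend q) eq -/(pend p) ep.
have eqr : pend q = pstart r by rewrite sr.
rewrite (pcatP eqa) (pcatP eqr); congr (bas K _).
by apply: val_inj => /=; rewrite ar -catA cats1.
Qed.

End QLemmas.

Section Sub.
Variable K : fieldType.
Variable Q : quiver.
Variable P : subquiver Q.
Local Notation R := (sub_quiver P).

Lemma valid_lift (v : vert R) (s : seq (arr R)) :
  valid_path (v, s) = valid_path (val v, map val s).
Proof.
rewrite /valid_path /=; case: s => [|a s] //=.
by rewrite path_map.
Qed.

Lemma liftp_valid (p : qpath R) : valid_path (val (pstart p), map val (parrs p)).
Proof. by rewrite -valid_lift /pstart /parrs -surjective_pairing; apply: valP. Qed.

Definition liftp (p : qpath R) : qpath Q := exist (fun x => valid_path x) _ (liftp_valid p).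

Lemma pend_lift p : pend (liftp p) = val (pend p).
Proof.
rewrite /pend.
have -> : pstart (liftp p) = val (pstart p) by [].
have -> : parrs (liftp p) = map val (parrs p) by [].
move: (pstart p) (parrs p) => v s; elim: s v => //= a s IH v.
exact: (IH (@tgt R a)).
Qed.

Lemma pcat_lift p q : pcat (liftp p) (liftp q) = omap liftp (pcat p q).
Proof.
case: (eqVneq (pend p) (pstart q)) => [e|ne].
  have e' : pend (liftp p) = pstart (liftp q) by rewrite pend_lift e.
  rewrite (pcatP e) (pcatP e') /=; congr Some; apply: val_inj => /=.
  by rewrite map_cat.
rewrite !pcat_none //; rewrite pend_lift /pstart /=.
by rewrite val_eqE.
Qed.

Lemma all_val (s : seq (arr R)) : all (sa P) (map val s).
Proof. by apply/allP => a /mapP [b _ ->]; exact: valP. Qed.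

Lemma pmap_val (s : seq (arr R)) : pmap insub (map val s) = s.
Proof. by elim: s => //= a s ->; rewrite valK. Qed.

Lemma map_pmap (s : seq (arr Q)) : all (sa P) s -> map val (pmap (@insub _ (sa P) (arr R)) s) = s.
Proof. by elim: s => //= a s IH /andP [Ha Hs]; rewrite insubT /= IH. Qed.

Definition Pof (p : qpath Q) : option (qpath R) :=
  if all (sa P) (parrs p) then
    (if @insub _ (sv P) (vert R) (pstart p) is Some v
     then insub (v, pmap (@insub _ (sa P) (arr R)) (parrs p)) else None)
  else None.

Lemma Pof_lift p' : Pof (liftp p') = Some p'.
Proof.
rewrite /Pof /= all_val valK pmap_val.
by rewrite /pstart /parrs -surjective_pairing valK.
Qed.

Lemma Pof_inv p p' : Pof p = Some p' -> p = liftp p'.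
Proof.
rewrite /Pof; case: ifP => // Hall; case: insubP => // v Hv ev.
case: insubP => // u _ eu [<-]; apply: val_inj => /=.
rewrite /pstart /parrs eu /= ev map_pmap //.
by rewrite -surjective_pairing.
Qed.

Lemma Pof_cond p : all (sa P) (parrs p) -> sv P (pstart p) -> exists p', Pof p = Some p'.
Proof.
move=> Ha Hs.
have Hv : valid_path ((Sub (pstart p) Hs : vert R), pmap (@insub _ (sa P) (arr R)) (parrs p)).
  by rewrite valid_lift /= map_pmap // /pstart /parrs -surjective_pairing; apply: valP.
by exists (Sub _ Hv); rewrite /Pof Ha insubT /= insubT.
Qed.

Lemma Pof_cat_none p q r : Pof p = None -> pcat p (liftp q) = Some r -> Pof r = None.
Proof.
move=> Hp /pcat_some [_ E]; case Hr: (Pof r) => [r'|] //.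
have Er := Pof_inv Hr.
have : val r = val (liftp r') by rewrite -Er.
rewrite E /= => -[e1 e2].
have Hs : sv P (pstart p) by rewrite e1; exact: valP.
have Ha : all (sa P) (parrs p).
  by have := all_val (parrs r'); rewrite -e2 all_cat => /andP [].
by have [p' Hp'] := Pof_cond Ha Hs; rewrite Hp' in Hp.
Qed.

Definition liftKQ (n : KQ K R) : KQ K Q := ext (fun p => bas K (liftp p)) n.
Definition resP (y : KQ K Q) : KQ K R :=
  ext (fun p => if Pof p is Some p' then bas K p' else 0) y.

Lemma resP_lin : (forall u v, resP (u + v) = resP u + resP v) /\
  (forall c u, resP (c *: u) = c *: resP u).
Proof. exact: ext_lin. Qed.
Lemma liftKQ_lin : (forall u v, liftKQ (u + v) = liftKQ u + liftKQ v) /\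
  (forall c u, liftKQ (c *: u) = c *: liftKQ u).
Proof. exact: ext_lin. Qed.

Lemma resP_lift n : resP (liftKQ n) = n.
Proof.
rewrite /liftKQ (ext_map _ _ resP_lin.1 resP_lin.2) [RHS]ext_decomp.
by apply: ext_eq => p _; rewrite /resP ext_bas Pof_lift.
Qed.

Lemma resP_B q y :
  resP (ext (fun p => B K p (liftp q)) y) = ext (fun p' => B K p' q) (resP y).
Proof.
rewrite (ext_map _ _ resP_lin.1 resP_lin.2).
rewrite {2}/resP (ext_map _ _ (ext_lin _).1 (ext_lin _).2).
apply: ext_eq => p _.
case H: (Pof p) => [p'|].
  rewrite (Pof_inv H) ext_bas {1}/B pcat_lift /B.
  by case: (pcat p' q) => [r|] /=; rewrite /resP ?ext_bas ?Pof_lift ?ext0.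
rewrite {1}/B; case E: (pcat p (liftp q)) => [r|].
  by rewrite /resP ext_bas (Pof_cat_none H E) /= ext0.
by rewrite /resP !ext0.
Qed.

Lemma liftp_triv (w : vert R) : liftp (ptriv w) = ptriv (val w).
Proof. exact: val_inj. Qed.
Lemma liftp_arr (a : arr R) : liftp (apath a) = apath (val a).
Proof. exact: val_inj. Qed.

End Sub.

Lemma gactE (K : fieldType) (Q : quiver) (X : rep K Q) (m : GX X) x :
  gact m x = ext (gpath m) x.
Proof. by []. Qed.

Section Main.
Local Unset Implicit Arguments.
Variable K : fieldType.
Variable Q : quiver.
Variable X : rep K Q.
Variable P : subquiver Q.
Local Notation R := (sub_quiver P).
Local Notation XP := (rep_restrict X P).
Local Notation KQQ := (KQ K Q).
Local Notation KQR := (KQ K R).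

Variable E : lmodType K.
Variable actE : E -> KQR -> E.
Hypothesis HE : is_kqmod actE.
Variable i : KQR -> E.
Variable pi : E -> GX XP.
Hypothesis ih : is_kqhom (@kqmul K R) actE i.
Hypothesis pih : is_kqhom actE (@gact K R XP) pi.
Hypothesis iinj : injective i.
Hypothesis pisurj : forall m, exists e, pi e = m.
Hypothesis exact : forall e, pi e = 0 <-> exists n, i n = e.

Lemma iA u v : i (u + v) = i u + i v. Proof. exact: ih.1. Qed.
Lemma i_act n x : i (kqmul n x) = actE (i n) x. Proof. exact: ih.2. Qed.
Lemma piA u v : pi (u + v) = pi u + pi v. Proof. exact: pih.1. Qed.
Lemma pi_act e x : pi (actE e x) = gact (pi e) x. Proof. exact: pih.2. Qed.

Lemma iZ c n : i (c *: n) = c *: i n.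
Proof.
have [x ex] := act_unital HE (i n).
have nx : kqmul n x = n by apply: iinj; rewrite i_act.
by rewrite -{1}nx -kqmulZr i_act (actZr HE) ex.
Qed.

Lemma piZ c e : pi (c *: e) = c *: pi e.
Proof.
have [x ex] := act_unital HE e.
by rewrite -{1}ex -(actZr HE) pi_act gactE ext_scale -gactE -pi_act ex.
Qed.

Lemma pi_i n : pi (i n) = 0. Proof. by apply/exact; exists n. Qed.

Variable Sg : GX XP -> E.
Hypothesis SA : forall u v, Sg (u + v) = Sg u + Sg v.
Hypothesis SZ : forall c u, Sg (c *: u) = c *: Sg u.
Hypothesis piS : forall m, pi (Sg m) = m.

Definition projE (w : vert R) e := actE e (bas K (ptriv w)).
Definition arrE (a : arr R) e := actE e (bas K (apath a)).
Definition sP (w : vert R) (u : rsp X (val w)) : E :=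
  projE w (Sg (@dinj K _ (rsp XP) w u)).

Lemma projEA w u v : projE w (u + v) = projE w u + projE w v.
Proof. exact: (actDl HE). Qed.
Lemma projEZ w c u : projE w (c *: u) = c *: projE w u.
Proof. exact: (actZl HE). Qed.
Lemma arrEA a u v : arrE a (u + v) = arrE a u + arrE a v.
Proof. exact: (actDl HE). Qed.
Lemma arrEZ a c u : arrE a (c *: u) = c *: arrE a u.
Proof. exact: (actZl HE). Qed.
Lemma sPA w u v : sP w (u + v) = sP w u + sP w v.
Proof. by rewrite /sP dinjD SA projEA. Qed.
Lemma sPZ w c u : sP w (c *: u) = c *: sP w u.
Proof. by rewrite /sP dinjZ SZ projEZ. Qed.

Lemma pi_projE w e : pi (projE w e) = gtriv (pi e) w.
Proof. by rewrite /projE pi_act gactE ext_bas. Qed.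
Lemma pi_arrE a e : pi (arrE a e) = garr (gtriv (pi e) (src a)) a.
Proof. by rewrite /arrE pi_act gactE ext_bas. Qed.
Lemma pi_sP w u : pi (sP w u) = @dinj K _ (rsp XP) w u.
Proof. by rewrite /sP pi_projE piS /gtriv dinj_eq. Qed.

Lemma projE_projE w w' e : projE w' (projE w e) = if w == w' then projE w e else 0.
Proof. by rewrite /projE (act_bas_cat HE) pcat_triv /=; case: eqP. Qed.
Lemma projE_sP w' w u : projE w' (sP w u) = if w == w' then sP w u else 0.
Proof. by rewrite /sP projE_projE. Qed.
Lemma arrE_projE a w e : arrE a (projE w e) = if w == src a then arrE a e else 0.
Proof. by rewrite /arrE /projE (act_bas_cat HE) pcat_triv_l /=; case: eqP. Qed.
Lemma arrE_sP a w u : w != src a -> arrE a (sP w u) = 0.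
Proof. by rewrite /sP arrE_projE => /negbTE ->. Qed.
Lemma projE_arrE a e : projE (tgt a) (arrE a e) = arrE a e.
Proof. by rewrite /arrE /projE (act_bas_cat HE) pcat_triv /= eqxx. Qed.

Definition invi (e : E) : KQR := classical_sets.xget 0 (fun n => i n = e).
Lemma invi_i n : invi (i n) = n.
Proof. by apply: classical_sets.xget_unique => // y /iinj. Qed.

Definition hP (a : arr R) (u : rsp X (src (val a))) : KQR :=
  invi (arrE a (sP (src a) u) - sP (tgt a) (rmap X (val a) u)).

Lemma piN e : pi (- e) = - pi e.
Proof. by rewrite -scaleN1r piZ scaleN1r. Qed.

Lemma hP_spec a u : i (hP a u) = arrE a (sP (src a) u) - sP (tgt a) (rmap X (val a) u).
Proof.
have : pi (arrE a (sP (src a) u) - sP (tgt a) (rmap X (val a) u)) = 0.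
  rewrite piA piN pi_arrE !pi_sP /gtriv dinj_eq /garr dinj_eq.
  by rewrite subrr.
by case/exact => n En; rewrite /hP -En invi_i.
Qed.

Lemma hPA a u v : hP a (u + v) = hP a u + hP a v.
Proof.
apply: iinj; rewrite iA !hP_spec linearD sPA arrEA sPA.
by rewrite opprD addrACA.
Qed.
Lemma hPZ a c u : hP a (c *: u) = c *: hP a u.
Proof.
apply: iinj; rewrite iZ !hP_spec linearZZ !sPZ arrEZ.
by rewrite scalerBr.
Qed.

Definition h (a : arr Q) (u : rsp X (src a)) : KQQ :=
  match pselect (sa P a) with
  | left H => @liftKQ K Q P (hP (exist (fun a => sa P a) a H : arr R) u)
  | right _ => 0
  end.

Lemma hA a u v : h a (u + v) = h a u + h a v.
Proof. by rewrite /h; case: pselect => H; rewrite ?addr0 // hPA (liftKQ_lin K P).1. Qed.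
Lemma hZ a c u : h a (c *: u) = c *: h a u.
Proof. by rewrite /h; case: pselect => H; rewrite ?scaler0 // hPZ (liftKQ_lin K P).2. Qed.

Local Notation V := (KQQ * GX X)%type.

Definition projV (w : vert Q) (v : V) : V :=
  (ext (fun p => B K p (ptriv w)) v.1, gtriv v.2 w).
Definition arrV (a : arr Q) (v : V) : V :=
  (ext (fun p => B K p (apath a)) v.1 +
   ext (fun p => B K p (ptriv (tgt a))) (h a (v.2 (src a))), garr v.2 a).

Lemma gtrivA (m m' : GX X) w : gtriv (m + m') w = gtriv m w + gtriv m' w.
Proof. exact: dinjD. Qed.
Lemma gtrivZ c (m : GX X) w : gtriv (c *: m) w = c *: gtriv m w.
Proof. exact: dinjZ. Qed.
Lemma garrA (m m' : GX X) a : garr (m + m') a = garr m a + garr m' a.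
Proof. by rewrite /garr dsumD linearD dinjD. Qed.
Lemma garrZ c (m : GX X) a : garr (c *: m) a = c *: garr m a.
Proof. by rewrite /garr dsumZ linearZZ dinjZ. Qed.

Lemma pairD (A B' : lmodType K) (a a' : A) (b b' : B') :
  ((a, b) + (a', b') : A * B') = (a + a', b + b').
Proof. by []. Qed.
Lemma pairZ (A B' : lmodType K) c (a : A) (b : B') :
  c *: ((a, b) : A * B') = (c *: a, c *: b).
Proof. by []. Qed.

Lemma projVA w u v : projV w (u + v) = projV w u + projV w v.
Proof. by case: u v => [y m] [y' m']; rewrite /projV /= ext_add gtrivA. Qed.
Lemma projVZ w c u : projV w (c *: u) = c *: projV w u.
Proof. by case: u => [y m]; rewrite /projV /= ext_scale gtrivZ. Qed.
Lemma arrVA a u v : arrV a (u + v) = arrV a u + arrV a v.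
Proof.
case: u v => [y m] [y' m']; rewrite /arrV /= !ext_add hA ext_add garrA pairD.
by congr pair; rewrite addrACA.
Qed.
Lemma arrVZ a c u : arrV a (c *: u) = c *: arrV a u.
Proof.
case: u => [y m]; rewrite /arrV /= !ext_scale hZ ext_scale garrZ pairZ.
by rewrite scalerDr.
Qed.

Lemma gtriv_gtriv (m : GX X) s w : gtriv (gtriv m s) w = if s == w then gtriv m s else 0.
Proof.
rewrite /gtriv; case: eqP => [<-|ne]; first by rewrite dinj_eq.
by rewrite dinj_neq ?dinj0 //; apply/eqP.
Qed.
Lemma gtriv_garr (m : GX X) a w : gtriv (garr m a) w = if tgt a == w then garr m a else 0.
Proof.
rewrite /gtriv /garr; case: eqP => [<-|ne]; first by rewrite dinj_eq.
by rewrite dinj_neq ?dinj0 //; apply/eqP.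
Qed.

Lemma PPV w s v : projV w (projV s v) = if s == w then projV s v else 0.
Proof.
case: v => y m; rewrite /projV /= ext_B_triv gtriv_gtriv.
by case: eqP.
Qed.
Lemma PAV w a v : projV w (arrV a v) = if tgt a == w then arrV a v else 0.
Proof.
case: v => y m; rewrite /projV /arrV /= ext_add ext_B_arr ext_B_triv gtriv_garr.
by case: eqP => //; rewrite addr0.
Qed.

Lemma pair_sum (A B' : lmodType K) (J : Type) (r : seq J) (f : J -> A) (g : J -> B') :
  \sum_(j <- r) ((f j, g j) : A * B') = (\sum_(j <- r) f j, \sum_(j <- r) g j).
Proof. by elim: r => [|a r IH]; rewrite ?big_nil ?big_cons // IH. Qed.

Lemma FinV v : exists s : seq (vert Q), v = \sum_(w <- s) projV w v.
Proof.
case: v => y m; exists (undup (map (@pend Q) (dsupp y) ++ dsupp m)).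
rewrite /projV /= pair_sum; congr pair.
  rewrite -ext_Fsum {1}(ext_decomp y); apply: ext_eq => p py.
  rewrite (bigD1_seq (pend p)) ?undup_uniq // ?mem_undup ?mem_cat ?map_f //=.
  rewrite B_triv eqxx big1 /= ?addr0 // => w ne.
  by rewrite B_triv eq_sym (negbTE ne).
rewrite {1}(dsum_decomp m) (dext_seq (s := undup (map (@pend Q) (dsupp y) ++ dsupp m))).
- by [].
- by move=> w; rewrite dinj0.
- exact: undup_uniq.
- by move=> w /dsuppP wm; rewrite mem_undup mem_cat wm orbT.
Qed.

Definition actV := ract projV arrV.
Lemma kqV : is_kqmod actV.
Proof. exact: (ract_kqmod projVA projVZ arrVA arrVZ PPV PAV FinV). Qed.

Lemma ext_pair (A B' : lmodType K) (F1 : qpath Q -> A) (F2 : qpath Q -> B') (x : KQQ) :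
  ext (fun p => ((F1 p, F2 p) : A * B')) x = (ext F1 x, ext F2 x).
Proof.
rewrite /ext /dext -pair_sum; apply: eq_bigr => p _; by rewrite pairZ.
Qed.

Lemma fold_snd (u : V) s : (foldl (fun u a => arrV a u) u s).2 = foldl (@garr K Q X) u.2 s.
Proof. by elim: s u => //= a s IH u; rewrite IH. Qed.

Lemma actV_snd v x : (actV v x).2 = gact v.2 x.
Proof.
rewrite /actV /ract (@ext_map _ _ _ _ _ (fun v : V => v.2) _ (fun _ _ => erefl) (fun _ _ => erefl)) gactE.
by apply: ext_eq => p _; rewrite /pathact fold_snd.
Qed.

Lemma h0 a : h a 0 = 0.
Proof. by have := hZ a 0 0; rewrite !scale0r. Qed.

Lemma fold0V s z : foldl (fun u a => arrV a u) ((z, 0) : V) s =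
  (foldl (fun z a => ext (fun t => B K t (apath a)) z) z s, 0).
Proof.
elim: s z => //= a s IH z; rewrite -IH; congr foldl.
rewrite /arrV /= h0 ext0 addr0; congr pair.
by rewrite /garr /= linear0 dinj0.
Qed.

Lemma foldB_ext s (G : qpath Q -> KQQ) y :
  foldl (fun z a => ext (fun t => B K t (apath a)) z) (ext G y) s =
  ext (fun q => foldl (fun z a => ext (fun t => B K t (apath a)) z) (G q) s) y.
Proof.
elim: s G => //= a s IH G.
by rewrite (ext_map _ _ (ext_lin _).1 (ext_lin _).2) IH.
Qed.

Lemma actV_i y x : actV (y, 0) x = (kqmul y x, 0).
Proof.
rewrite /actV /ract.
have -> : pathact projV arrV (y, 0) = fun p =>
   (ext (fun q => B K q p) y, 0).
  apply: funext => p; rewrite /pathact /projV /= /gtriv dsum0E dinj0 fold0V.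
  by rewrite foldB_ext; congr pair; apply: ext_eq => q _; rewrite [RHS]B_path.
rewrite ext_pair ext_F0 kqmulE ext_swap; by [].
Qed.

Lemma ext1_E' (Hyp : ext1_zero (@gact K Q X) (@kqmul K Q)) :
  exists sig : GX X -> V, is_kqhom (@gact K Q X) actV sig /\ forall m, (sig m).2 = m.
Proof.
have := Hyp V actV kqV (fun y => (y, 0)) (fun v => v.2).
case.
- by split => [u v|n x]; rewrite ?pairD ?addr0 // actV_i.
- by split => [u v|v x] //; rewrite actV_snd.
- by move=> u v [].
- by move=> m; exists (0, m).
- by case=> y m /=; split => [->|[n [_ <-]]] //; exists y.
by move=> sig [Hs Hp]; exists sig.
Qed.

Definition sPQ (w : vert Q) (u : rsp X w) : E :=
  match pselect (sv P w) with
  | left H => sP (exist (fun v => sv P v) w H : vert R) u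
  | right _ => 0
  end.
Definition Psi (m : GX X) : E := dext sPQ m.
Definition Phi (v : V) : E := i (resP P v.1) + Psi v.2.
Definition incl (m0 : GX XP) : GX X :=
  dext (fun (w : vert R) (u : rsp XP w) => @dinj K _ (rsp X) (val w) u) m0.

Lemma sPQA w u v : sPQ w (u + v) = sPQ w u + sPQ w v.
Proof. by rewrite /sPQ; case: pselect => H; rewrite ?addr0 // sPA. Qed.
Lemma sPQZ w c u : sPQ w (c *: u) = c *: sPQ w u.
Proof. by rewrite /sPQ; case: pselect => H; rewrite ?scaler0 // sPZ. Qed.
Lemma sPQ0 w : sPQ w 0 = 0.
Proof. by have := sPQZ w 0 0; rewrite !scale0r. Qed.
Lemma sPQ_val (w : vert R) u : sPQ (val w) u = sP w u.
Proof.
rewrite /sPQ; case: pselect => H; last by case: H; exact: valP.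
case: w u H => w Hw u H /=; by rewrite (eq_irrelevance H Hw).
Qed.

Lemma PsiA u v : Psi (u + v) = Psi u + Psi v.
Proof. by apply: dext_add; intros; rewrite ?sPQA ?sPQZ. Qed.
Lemma PsiZ c u : Psi (c *: u) = c *: Psi u.
Proof. by apply: dext_scale; intros; rewrite ?sPQA ?sPQZ. Qed.
Lemma Psi_dinj w u : Psi (@dinj K _ (rsp X) w u) = sPQ w u.
Proof. by apply: dext_dinj; intros; rewrite ?sPQA ?sPQZ. Qed.

Lemma PhiA u v : Phi (u + v) = Phi u + Phi v.
Proof.
case: u v => [y m] [y' m']; rewrite /Phi /= (resP_lin K P).1 iA PsiA.
by rewrite addrACA.
Qed.
Lemma PhiZ c u : Phi (c *: u) = c *: Phi u.
Proof.
case: u => [y m]; rewrite /Phi /= (resP_lin K P).2 iZ PsiZ.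
by rewrite scalerDr.
Qed.

Lemma inclA u v : incl (u + v) = incl u + incl v.
Proof. by apply: dext_add => *; rewrite ?dinjD ?dinjZ. Qed.
Lemma inclZ c u : incl (c *: u) = c *: incl u.
Proof. by apply: dext_scale => *; rewrite ?dinjD ?dinjZ. Qed.
Lemma incl_dinj w u : incl (@dinj K _ (rsp XP) w u) = @dinj K _ (rsp X) (val w) u.
Proof. by apply: dext_dinj => *; rewrite ?dinjD ?dinjZ. Qed.

Lemma incl_eval m0 (w : vert R) : incl m0 (val w) = m0 w.
Proof.
rewrite /incl (dext_seq (s := undup (w :: dsupp m0))); last 3 first.
- by move=> v; rewrite dinj0.
- exact: undup_uniq.
- by move=> v /dsuppP; rewrite mem_undup inE => ->; rewrite orbT.
rewrite dsum_sumE (bigD1_seq w) ?undup_uniq ?mem_undup ?mem_head // dinj_eq.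
rewrite big1 => [|v ne]; first by rewrite /= addr0.
by rewrite dinj_neq //; apply: contra ne => /eqP /val_inj ->.
Qed.

Lemma incl_gtriv m0 w : incl (gtriv m0 w) = gtriv (incl m0) (val w).
Proof. by rewrite /gtriv incl_dinj incl_eval. Qed.
Lemma incl_garr m0 (a : arr R) : incl (garr m0 a) = garr (incl m0) (val a).
Proof. by rewrite /garr incl_dinj (incl_eval m0 (src a)). Qed.

Lemma incl_gpath m0 p : incl (gpath m0 p) = gpath (incl m0) (liftp p).
Proof.
rewrite /gpath.
have -> : pstart (liftp p) = val (pstart p) by [].
have -> : parrs (liftp p) = map val (parrs p) by [].
rewrite -incl_gtriv; move: (gtriv m0 (pstart p)) => u.
by elim: (parrs p) u => //= a s IH u; rewrite -incl_garr IH.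
Qed.

Lemma K1 m0 x : incl (gact m0 x) = gact (incl m0) (liftKQ x).
Proof.
rewrite !gactE (ext_map _ _ inclA inclZ) /liftKQ.
rewrite (ext_map _ _ (ext_lin _).1 (ext_lin _).2).
by apply: ext_eq => p _; rewrite ext_bas incl_gpath.
Qed.

Lemma dext_pick (W : lmodType K) (F : forall w, rsp X w -> W) (F0 : forall w, F w 0 = 0) v (m : GX X) :
  dext (fun w u => if w == v then F w u else 0) m = F v (m v).
Proof.
rewrite (dext_seq (s := undup (v :: dsupp m))); last 3 first.
- by move=> w; rewrite F0; case: eqP.
- exact: undup_uniq.
- by move=> w /dsuppP; rewrite mem_undup inE => ->; rewrite orbT.
rewrite (bigD1_seq v) ?undup_uniq ?mem_undup ?mem_head //= eqxx.
by rewrite big1 => [|w /negbTE ->] //; rewrite addr0.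
Qed.

Lemma projE0 w : projE w 0 = 0.
Proof. exact: (act0l HE). Qed.
Lemma arrE0 a : arrE a 0 = 0.
Proof. exact: (act0l HE). Qed.

Lemma projE_Psi (w : vert R) m : projE w (Psi m) = sP w (m (val w)).
Proof.
rewrite /Psi (dext_map _ _ (projEA w)) -sPQ_val -(dext_pick _ sPQ sPQ0).
apply: dext_eq => v _; rewrite /sPQ; case: pselect => H; last by rewrite projE0; case: eqP.
rewrite projE_sP; by [].
Qed.

Lemma arrE_Psi (a : arr R) m : arrE a (Psi m) = arrE a (sP (src a) (m (val (src a)))).
Proof.
rewrite /Psi (dext_map _ _ (arrEA a)) -sPQ_val.
rewrite -(dext_pick _ (fun w u => arrE a (sPQ w u))); last by move=> w; rewrite sPQ0 arrE0.
apply: dext_eq => v _; rewrite /sPQ; case: pselect => H; last by rewrite arrE0; case: eqP.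
case: eqP => [e|ne] //; rewrite arrE_sP //.
by apply/eqP => e; apply: ne; rewrite -e.
Qed.

Lemma Phi_proj (w : vert R) v : Phi (projV (val w) v) = projE w (Phi v).
Proof.
case: v => y m; rewrite /Phi /projV /= projEA projE_Psi.
rewrite -liftp_triv resP_B -kqmul_basr i_act.
by rewrite /gtriv Psi_dinj sPQ_val.
Qed.

Lemma h_val (a : arr R) u : h (val a) u = liftKQ (hP a u).
Proof.
rewrite /h; case: pselect => H; last by case: H; exact: valP.
case: a u H => a Ha u H /=; by rewrite (eq_irrelevance H Ha).
Qed.

Lemma projEN w e : projE w (- e) = - projE w e.
Proof. by rewrite -scaleN1r projEZ scaleN1r. Qed.

Lemma Phi_arr (a : arr R) v : Phi (arrV (val a) v) = arrE a (Phi v).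
Proof.
case: v => y m; rewrite /Phi /arrV /= arrEA arrE_Psi.
rewrite (resP_lin K P).1 iA.
have -> : ptriv (tgt (val a)) = liftp (ptriv (tgt a)) by rewrite liftp_triv.
rewrite -liftp_arr !resP_B.
rewrite (h_val a) resP_lift -!kqmul_basr !i_act hP_spec.
rewrite /garr Psi_dinj.
have -> : sPQ (tgt (val a)) (rmap X (val a) (m (src (val a)))) =
          sP (tgt a) (rmap X (val a) (m (src (val a)))) by rewrite -sPQ_val.
rewrite -/(projE _ _) projEA projEN projE_arrE projE_sP eqxx.
by rewrite -/(arrE _ _) -addrA addrNK.
Qed.

Lemma Phi_fold (u : V) (s : seq (arr R)) :
  Phi (foldl (fun u a => arrV a u) u (map val s)) = foldl (fun u a => arrE a u) (Phi u) s.
Proof. by elim: s u => //= a s IH u; rewrite IH Phi_arr. Qed.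

Lemma Phi_path v p : Phi (pathact projV arrV v (liftp p)) = actE (Phi v) (bas K p).
Proof.
rewrite (act_bas_path HE) /pathact.
have -> : pstart (liftp p) = val (pstart p) by [].
have -> : parrs (liftp p) = map val (parrs p) by [].
by rewrite Phi_fold Phi_proj.
Qed.

Lemma K2 v x : Phi (actV v (liftKQ x)) = actE (Phi v) x.
Proof.
rewrite /actV /ract /liftKQ (ext_map _ _ (ext_lin _).1 (ext_lin _).2).
rewrite (ext_map _ _ PhiA PhiZ) (act_ext HE).
by apply: ext_eq => p _; rewrite ext_bas Phi_path.
Qed.

Lemma Psi_incl m0 : pi (Psi (incl m0)) = m0.
Proof.
rewrite /incl (dext_map _ _ PsiA) (dext_map _ _ piA) [RHS]dsum_decomp.
by apply: dext_eq => w _; rewrite Psi_dinj sPQ_val pi_sP.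
Qed.

Lemma main_split (Hyp : ext1_zero (@gact K Q X) (@kqmul K Q)) :
  exists sigma : GX XP -> E, is_kqhom (@gact K R XP) actE sigma /\ forall m, pi (sigma m) = m.
Proof.
have [sig [[sA sAct] sPi]] := ext1_E' Hyp.
exists (fun m0 => Phi (sig (incl m0))); split; first split.
- by move=> u v; rewrite inclA sA PhiA.
- by move=> m0 x; rewrite K1 sAct K2.
move=> m0; rewrite /Phi piA pi_i add0r sPi; exact: Psi_incl.
Qed.

End Main.

Theorem proposition1p8 (K : closedFieldType) (Q : quiver) (X : rep K Q) :
  ext1_zero (@gact K Q X) (@kqmul K Q) ->
  forall P : subquiver Q, closed_subquiver P ->
  ext1_zero (@gact K (sub_quiver P) (rep_restrict X P)) (@kqmul K (sub_quiver P)).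
Proof.
move=> Hyp P _ E actE HE i pi ih pih iinj pisurj exact.
have fA : forall u v, pi (u + v) = pi u + pi v := pih.1.
have fZ := piZ _ _ _ _ _ _ HE _ pih.
have [Sg [SA SZ piS]] := lin_section fA fZ pisurj.
exact: (main_split _ _ _ _ _ _ HE _ _ ih pih iinj exact _ SA SZ piS Hyp).
Qed.
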